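(* Let $\mathcal{A}$ be a unital $*$-algebra. Then $\mathcal{D}(\mathcal{A})$ is $*$-isomorphic to a $*$-subalgebra of the free product of $*$-algebras $\mathcal{A}\star \mathcal{D}(\mathbb{C} [\mathbb{Z}_2])\star \mathcal{D}(\mathbb{C} [\mathbb{Z}_2])$.
   Context: All algebras are complex and unital. For a unital associative algebra $\mathcal{A}$, $\mathcal{A}^*$ is an associative algebra with an additive, conjugate-linear, anti-multiplicative bijection $\phi:\mathcal{A}\to\mathcal{A}^*$. The $*$-double $\mathcal{D}(\mathcal{A})$ is the unital free product $\mathcal{A}*\mathcal{A}^*$ of associative algebras with involution determined by $a^*=\phi(a)$ for $a\in\mathcal{A}$ and $b^*=\phi^{-1}(b)$ for $b\in\mathcal{A}^*$; for a $*$-algebra $\mathcal{A}$, $\mathcal{D}(\mathcal{A})$ is formed from its underlying associative algebra (ignoring the original involution). $\mathbb{C}[\mathbb{Z}_2]$ is the group algebra of the two-element group, regarded as an associative algebra. The symbol $\star$ denotes the unital free product in the category of $*$-algebras, where $\mathcal{A}$ carries its own involution. *)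

(* Defs.v *)
From HB Require Import structures.
From mathcomp Require Import all_boot all_order all_algebra.
From mathcomp Require Import complex.
From mathcomp Require Import Rstruct.
Set Implicit Arguments. Unset Strict Implicit. Unset Printing Implicit Defensive.
Import Order.TTheory GRing.Theory Num.Theory.
Local Open Scope ring_scope.

Definition Cplx : numClosedFieldType := (Rdefinitions.R)[i].

Definition alg_hom (A B : algType Cplx) (f : A -> B) : Prop :=
  linear f /\ monoid_morphism f.

Definition is_star (A : algType Cplx) (s : A -> A) : Prop :=
  [/\ involutive s,
      (forall x y, s (x + y) = s x + s y),
      (forall (c : Cplx) x, s (c *: x) = c^* *: s x) &
      (forall x y, s (x * y) = s y * s x)].

Definition star_hom (A B : algType Cplx) (sA : A -> A) (sB : B -> B)
  (f : A -> B) : Prop :=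
  alg_hom f /\ forall x, f (sA x) = sB (f x).

(* A' is an "A^*" for A via phi: additive, conjugate-linear,
   anti-multiplicative bijection A -> A'. *)
Definition is_conj_opp (A A' : algType Cplx) (phi : A -> A') : Prop :=
  [/\ bijective phi,
      (forall x y, phi (x + y) = phi x + phi y),
      (forall (c : Cplx) x, phi (c *: x) = c^* *: phi x) &
      (forall x y, phi (x * y) = phi y * phi x)].

Definition is_free_product2 (A B P : algType Cplx) (i : A -> P) (j : B -> P)
  : Prop :=
  [/\ alg_hom i, alg_hom j &
   forall (Q : algType Cplx) (f : A -> Q) (g : B -> Q),
     alg_hom f -> alg_hom g ->
     exists h : P -> Q,
       [/\ alg_hom h, (forall a, h (i a) = f a), (forall b, h (j b) = g b) &
        forall h' : P -> Q, alg_hom h' ->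
          (forall a, h' (i a) = f a) -> (forall b, h' (j b) = g b) ->
          forall x, h' x = h x]].

(* (D, sD, i, j) is the *-double D(A) = A * A^* (with A^* given by phi),
   with involution determined by a^* = phi a and b^* = phi^{-1} b. *)
Definition is_star_double (A A' D : algType Cplx) (phi : A -> A')
  (sD : D -> D) (i : A -> D) (j : A' -> D) : Prop :=
  [/\ is_conj_opp phi, is_free_product2 i j, is_star sD,
      (forall a, sD (i a) = j (phi a)) &
      (forall a, sD (j (phi a)) = i a)].

Definition is_group_alg_Z2 (G : algType Cplx) (g : G) : Prop :=
  g * g = 1 /\
  forall x : G, exists! ab : Cplx * Cplx, x = ab.1 *: 1 + ab.2 *: g.

Definition is_star_free_product3 (A B1 B2 P : algType Cplx)
  (sA : A -> A) (s1 : B1 -> B1) (s2 : B2 -> B2) (sP : P -> P)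
  (k0 : A -> P) (k1 : B1 -> P) (k2 : B2 -> P) : Prop :=
  [/\ is_star sP, star_hom sA sP k0, star_hom s1 sP k1, star_hom s2 sP k2 &
   forall (Q : algType Cplx) (sQ : Q -> Q) (f0 : A -> Q) (f1 : B1 -> Q)
          (f2 : B2 -> Q),
     is_star sQ -> star_hom sA sQ f0 -> star_hom s1 sQ f1 ->
     star_hom s2 sQ f2 ->
     exists h : P -> Q,
       [/\ star_hom sP sQ h, (forall a, h (k0 a) = f0 a),
           (forall b, h (k1 b) = f1 b), (forall b, h (k2 b) = f2 b) &
        forall h' : P -> Q, star_hom sP sQ h' ->
          (forall a, h' (k0 a) = f0 a) -> (forall b, h' (k1 b) = f1 b) ->
          (forall b, h' (k2 b) = f2 b) -> forall x, h' x = h x]].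

(* Main.v *)
Require Import Defs.
From HB Require Import structures.
From mathcomp Require Import all_boot all_order all_algebra.
From mathcomp Require Import complex.
From mathcomp Require Import Rstruct.
From Stdlib Require Import ClassicalEpsilon.
Set Implicit Arguments. Unset Strict Implicit. Unset Printing Implicit Defensive.
Import GRing.Theory Num.Theory.
Local Open Scope ring_scope.

Section Gen.

Lemma ah0 (A B : algType Cplx) (f : A -> B) : alg_hom f -> f 0 = 0.
Proof.
case=> L _; have := L 1 0 0; rewrite scale1r addr0 scale1r => E.
by apply: (@addrI _ (f 0)); rewrite addr0 -E.
Qed.

Lemma ahD (A B : algType Cplx) (f : A -> B) : alg_hom f -> forall x y, f (x + y) = f x + f y.
Proof. by move=> H x y; case: H => L _; have := L 1 x y; rewrite !scale1r. Qed.

Lemma ahZ (A B : algType Cplx) (f : A -> B) : alg_hom f -> forall c x, f (c *: x) = c *: f x.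
Proof. by move=> H c x; have := ah0 H; case: H => L _ h0; have := L c x 0; rewrite !addr0 h0 addr0. Qed.

Lemma ahM (A B : algType Cplx) (f : A -> B) : alg_hom f -> forall x y, f (x * y) = f x * f y.
Proof. by case=> _ [_ M]. Qed.

Lemma ah1 (A B : algType Cplx) (f : A -> B) : alg_hom f -> f 1 = 1.
Proof. by case=> _ [O _]. Qed.

Lemma mk_ah (A B : algType Cplx) (f : A -> B) :
  (forall x y, f (x + y) = f x + f y) -> (forall c x, f (c *: x) = c *: f x) ->
  (forall x y, f (x * y) = f x * f y) -> f 1 = 1 -> alg_hom f.
Proof. by move=> D Z M O; split => [a u v|]; [rewrite D Z | split]. Qed.

Definition cah (A B : algType Cplx) (s : A -> B) :=
  [/\ (forall x y, s (x + y) = s x + s y), (forall (c : Cplx) x, s (c *: x) = c^* *: s x),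
      (forall x y, s (x * y) = s y * s x) & s 1 = 1].

Lemma ah_comp (A B C : algType Cplx) (f : A -> B) (g : B -> C) :
  alg_hom f -> alg_hom g -> alg_hom (g \o f).
Proof.
move=> Hf Hg; apply: mk_ah => [x y|c x|x y|] /=.
- by rewrite (ahD Hf) (ahD Hg).
- by rewrite (ahZ Hf) (ahZ Hg).
- by rewrite (ahM Hf) (ahM Hg).
- by rewrite (ah1 Hf) (ah1 Hg).
Qed.

Lemma cah_cah (A B C : algType Cplx) (f : A -> B) (g : B -> C) :
  cah f -> cah g -> alg_hom (g \o f).
Proof.
move=> [fD fZ fM f1] [gD gZ gM g1]; apply: mk_ah => [x y|c x|x y|] /=.
- by rewrite fD gD.
- by rewrite fZ gZ conjCK.
- by rewrite fM gM.
- by rewrite f1 g1.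
Qed.

Lemma cah_ah (A B C : algType Cplx) (f : A -> B) (g : B -> C) :
  alg_hom f -> cah g -> cah (g \o f).
Proof.
move=> Hf [gD gZ gM g1]; split => [x y|c x|x y|] /=.
- by rewrite (ahD Hf) gD.
- by rewrite (ahZ Hf) gZ.
- by rewrite (ahM Hf) gM.
- by rewrite (ah1 Hf) g1.
Qed.

Lemma ah_cah (A B C : algType Cplx) (f : A -> B) (g : B -> C) :
  cah f -> alg_hom g -> cah (g \o f).
Proof.
move=> [fD fZ fM f1] Hg; split => [x y|c x|x y|] /=.
- by rewrite fD (ahD Hg).
- by rewrite fZ (ahZ Hg).
- by rewrite fM (ahM Hg).
- by rewrite f1 (ah1 Hg).
Qed.

Lemma star_cah (A : algType Cplx) (s : A -> A) : is_star s -> cah s.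
Proof.
move=> [I D Z M]; split => //.
have E := M (s 1) 1; rewrite mulr1 I mulr1 in E.
by rewrite -E.
Qed.


Lemma conj_opp_cah (A B : algType Cplx) (phi : A -> B) : is_conj_opp phi ->
  cah phi /\ exists psi : B -> A, [/\ cancel phi psi, cancel psi phi & cah psi].
Proof.
move=> [[g c1 c2] D Z M].
have O : phi 1 = 1.
  by have := M (g 1) 1; rewrite mulr1 c2 mulr1 => <-.
split; first by split.
have inj := can_inj c1.
exists g; split => //; split => [x y|c x|x y|].
- by apply: inj; rewrite D !c2.
- by apply: inj; rewrite Z !c2 conjCK.
- by apply: inj; rewrite M !c2.
- by rewrite -O c1.
Qed.

Lemma fp_unique (A B P : algType Cplx) (i : A -> P) (j : B -> P) (Q : algType Cplx)
  (h1 h2 : P -> Q) : is_free_product2 i j -> alg_hom h1 -> alg_hom h2 ->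
  (forall a, h1 (i a) = h2 (i a)) -> (forall b, h1 (j b) = h2 (j b)) -> h1 =1 h2.
Proof.
move=> [Hi Hj U] H1 H2 E1 E2 x.
have [h [_ _ _ Uh]] := U Q (h2 \o i) (h2 \o j) (ah_comp Hi H2) (ah_comp Hj H2).
by rewrite (Uh h1 H1 E1 E2) (Uh h2 H2).
Qed.

Lemma double_ext (A A' D Q : algType Cplx) (phi : A -> A') (sD : D -> D)
  (i : A -> D) (j : A' -> D) (sQ : Q -> Q) (rho : A -> Q) :
  is_star_double phi sD i j -> is_star sQ -> alg_hom rho ->
  exists F : D -> Q, star_hom sD sQ F /\ forall a, F (i a) = rho a.
Proof.
move=> [Hphi HF HsD E1 E2] HsQ Hr.
have [_ [psi [c1 c2 Cpsi]]] := conj_opp_cah Hphi.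
have CsQ := star_cah HsQ; have CsD := star_cah HsD.
have HsQI : involutive sQ by case: HsQ.
have HsDI : involutive sD by case: HsD.
have Hr' : alg_hom (sQ \o (rho \o psi)) by apply: cah_cah => //; apply: ah_cah.
have [Hi Hj U] := HF.
have [F [HFh Fi Fj _]] := U Q rho _ Hr Hr'.
have HG : alg_hom (sQ \o (F \o sD)) by apply: cah_cah => //; apply: ah_cah.
have EG : sQ \o (F \o sD) =1 F.
  apply: (fp_unique HF) => // [a|b] /=.
  - by rewrite E1 Fj /= c1 HsQI.
  - by rewrite -[b]c2 E2 Fi Fj /= c1.
exists F; split => //; split => // x.
by have := EG (sD x); rewrite /= HsDI => ->.
Qed.

End Gen.

Lemma mulform (B : algType Cplx) (v : B) (vv : v * v = 1) (a b a' b' : Cplx) :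
  (a *: 1 + b *: v) * (a' *: 1 + b' *: v) = (a * a' + b * b') *: 1 + (a * b' + b * a') *: v.
Proof.

rewrite !mulrDl !mulrDr -!scalerAl -!scalerAr !scalerA !mul1r !mulr1 vv !scalerDl.
rewrite -!addrA; congr (_ + _); by rewrite addrA addrC.
Qed.

Lemma z2_hom (G : algType Cplx) (g : G) (HG : is_group_alg_Z2 g) (B : algType Cplx) (v : B) :
  v * v = 1 -> exists gam : G -> B, alg_hom gam /\ gam g = v.
Proof.

move=> vv; have [gg Hu] := HG.
have Ex : forall x, exists ab : Cplx * Cplx, x = ab.1 *: 1 + ab.2 *: g.
  by move=> x; case: (Hu x) => ab [? _]; exists ab.
pose co x := proj1_sig (constructive_indefinite_description _ (Ex x)).
have coP x : x = (co x).1 *: 1 + (co x).2 *: g.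
  exact: (proj2_sig (constructive_indefinite_description _ (Ex x))).
have coU x a b : x = a *: 1 + b *: g -> co x = (a, b).
  move=> E; have [ab [_ U]] := Hu x.
  by rewrite -(U _ (coP x)) (U (a, b)).
pose gam x := (co x).1 *: (1 : B) + (co x).2 *: v.
have gamE x a b : x = a *: 1 + b *: g -> gam x = a *: 1 + b *: v.
  by move=> /coU E; rewrite /gam E.
exists gam; split; last first.
  by rewrite (gamE g 0 1) ?scale0r ?add0r ?scale1r.
apply: mk_ah => [x y|c x|x y|].
- case: (Ex x) => [[a b] /= ->]; case: (Ex y) => [[a' b'] /= ->].
  rewrite (gamE (a *: 1 + b *: g) a b) // (gamE (a' *: 1 + b' *: g) a' b') //.
  rewrite (gamE _ (a + a') (b + b')); first by rewrite !scalerDl addrACA.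
  by rewrite !scalerDl addrACA.
- case: (Ex x) => [[a b] /= ->].
  rewrite (gamE (a *: 1 + b *: g) a b) //.
  rewrite (gamE _ (c * a) (c * b)); first by rewrite scalerDr !scalerA.
  by rewrite scalerDr !scalerA.
- case: (Ex x) => [[a b] /= ->]; case: (Ex y) => [[a' b'] /= ->].
  rewrite (gamE (a *: 1 + b *: g) a b) // (gamE (a' *: 1 + b' *: g) a' b') //.
  by rewrite (gamE _ _ _ (mulform gg _ _ _ _)) mulform.
- by rewrite (gamE 1 1 0) ?scale0r ?addr0 ?scale1r.
Qed.



Section M2.
Variable DA : algType Cplx.

Definition Q := 'M[DA]_2.
HB.instance Definition _ := GRing.NzRing.on Q.

Definition scaleQ (c : Cplx) (X : Q) : Q := map_mx (fun x => c *: x) X.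

Lemma scaleQA a b v : scaleQ a (scaleQ b v) = scaleQ (a * b) v.
Proof. by apply/matrixP => i j; rewrite !mxE scalerA. Qed.
Lemma scaleQ1 : left_id 1 scaleQ.
Proof. by move=> v; apply/matrixP => i j; rewrite !mxE scale1r. Qed.
Lemma scaleQDr : right_distributive scaleQ +%R.
Proof. by move=> a u v; apply/matrixP => i j; rewrite !mxE scalerDr. Qed.
Lemma scaleQDl v : {morph scaleQ^~ v: a b / a + b}.
Proof. by move=> a b; apply/matrixP => i j; rewrite !mxE scalerDl. Qed.

HB.instance Definition _ := GRing.Zmodule_isLmodule.Build Cplx Q scaleQA scaleQ1 scaleQDr scaleQDl.

Lemma scaleQAl (a : Cplx) (u v : Q) : a *: (u * v) = (a *: u) * v.
Proof.
apply/matrixP => i j; rewrite !mxE scaler_sumr; apply: eq_bigr => k _.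
by rewrite !mxE scalerAl.
Qed.
HB.instance Definition _ := GRing.Lmodule_isLalgebra.Build Cplx Q scaleQAl.
Lemma scaleQAr (a : Cplx) (u v : Q) : a *: (u * v) = u * (a *: v).
Proof.
apply/matrixP => i j; rewrite !mxE scaler_sumr; apply: eq_bigr => k _.
by rewrite !mxE scalerAr.
Qed.
HB.instance Definition _ := GRing.Lalgebra_isAlgebra.Build Cplx Q scaleQAr.


Definition i0 : 'I_2 := ord0.
Definition i1 : 'I_2 := ord_max.

Definition mkQ (a b c d : DA) : Q :=
  \matrix_(i, j) if i == i0 then (if j == i0 then a else b) else (if j == i0 then c else d).

Lemma ord2P (i : 'I_2) : i = i0 \/ i = i1.
Proof. by case: i => [[|[|//]] Hi]; [left|right]; apply/val_inj. Qed.

Lemma mkQ_eta (X : Q) : X = mkQ (X i0 i0) (X i0 i1) (X i1 i0) (X i1 i1).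
Proof.
by apply/matrixP => i j; rewrite mxE; case: (ord2P i) => ->; case: (ord2P j) => ->.
Qed.

Lemma mkQ_inj a b c d a' b' c' d' : mkQ a b c d = mkQ a' b' c' d' -> a = a'.
Proof. by move/matrixP/(_ i0 i0); rewrite !mxE. Qed.

Lemma sum2 (F : 'I_2 -> DA) : \sum_(k < 2) F k = F i0 + F i1.
Proof.
rewrite !big_ord_recl big_ord0 addr0; congr (_ + F _); exact/val_inj.
Qed.

Lemma mulmk a b c d a' b' c' d' :
  mkQ a b c d * mkQ a' b' c' d' =
  mkQ (a * a' + b * c') (a * b' + b * d') (c * a' + d * c') (c * b' + d * d').
Proof.
apply/matrixP => i j; rewrite !mxE sum2 !mxE.
by case: (ord2P i) => ->; case: (ord2P j) => ->.
Qed.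

Lemma addmk a b c d a' b' c' d' :
  mkQ a b c d + mkQ a' b' c' d' = mkQ (a + a') (b + b') (c + c') (d + d').
Proof.
apply/matrixP => i j; rewrite !mxE.
by case: (ord2P i) => ->; case: (ord2P j) => ->.
Qed.

Lemma scalemk (k : Cplx) a b c d :
  k *: mkQ a b c d = mkQ (k *: a) (k *: b) (k *: c) (k *: d).
Proof.
apply/matrixP => i j; rewrite !mxE.
by case: (ord2P i) => ->; case: (ord2P j) => ->.
Qed.

Lemma onemk : (1 : Q) = mkQ 1 0 0 1.
Proof.
apply/matrixP => i j; rewrite !mxE.
by case: (ord2P i) => ->; case: (ord2P j) => ->.
Qed.

Variable sD : DA -> DA.
Hypothesis HsD : is_star sD.

Definition sQ (X : Q) : Q := mkQ (sD (X i1 i1)) (sD (X i0 i1)) (sD (X i1 i0)) (sD (X i0 i0)).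

Lemma sQmk a b c d : sQ (mkQ a b c d) = mkQ (sD d) (sD b) (sD c) (sD a).
Proof. by rewrite /sQ !mxE. Qed.

Lemma sQ_star : is_star sQ.
Proof.
have [I D Z M] := HsD.
split => [X|X Y|k X|X Y].
- by rewrite [X in RHS]mkQ_eta /sQ !mxE !I.
- by rewrite [X]mkQ_eta [Y]mkQ_eta addmk !sQmk addmk !D.
- by rewrite [X]mkQ_eta scalemk !sQmk scalemk !Z.
- by rewrite [X]mkQ_eta [Y]mkQ_eta mulmk !sQmk mulmk !D !M addrC; congr mkQ; rewrite addrC.
Qed.

Lemma algM (x y : Cplx) : x%:A * y%:A = (x * y)%:A :> DA.
Proof. by rewrite mulr_algl scalerA. Qed.

Lemma cah0 (A B : algType Cplx) (f : A -> B) : cah f -> f 0 = 0.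
Proof.
case=> D _ _ _; have := D 0 0; rewrite addr0 => E.
by apply: (@addrI _ (f 0)); rewrite addr0 -E.
Qed.

Lemma cahN (A B : algType Cplx) (f : A -> B) : cah f -> forall x, f (- x) = - f x.
Proof.
move=> C x; have := cah0 C; case: C => D _ _ _ h0.
by apply: (@addrI _ (f x)); rewrite -D !subrr h0.
Qed.

Lemma cahA (f : DA -> DA) (C : cah f) (k : Cplx) : f k%:A = (k^*)%:A.
Proof. by case: C => _ Z _ O; rewrite Z O. Qed.
End M2.



Lemma keyU (DA : algType Cplx) (sD : DA -> DA) (HsD : is_star sD) (s : Cplx) (sc : s^* = s) (p q : DA) :
  let U : Q DA := mkQ s%:A s%:A s%:A (- s%:A) in
  sQ sD U * mkQ p 0 0 q * sQ sD U = U * mkQ q 0 0 p * U.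
Proof.
move=> U; have C := star_cah HsD.
rewrite /U sQmk !(cahN C) !(cahA C) sc !mulmk.
rewrite !(mulr0, mul0r, addr0, add0r, mulNr, mulrN, opprK, mulr_algl, mulr_algr, scalerA, scalerN).
by congr mkQ; rewrite addrC.
Qed.

Theorem lemma1
  (A : algType Cplx) (sA : A -> A) (HA : is_star sA)
  (A' : algType Cplx) (phi : A -> A') (DA : algType Cplx) (sDA : DA -> DA)
  (iA : A -> DA) (jA : A' -> DA) (HDA : is_star_double phi sDA iA jA)
  (G : algType Cplx) (g : G) (HG : is_group_alg_Z2 g)
  (G' : algType Cplx) (psi : G -> G') (DG : algType Cplx) (sDG : DG -> DG)
  (iG : G -> DG) (jG : G' -> DG) (HDG : is_star_double psi sDG iG jG)
  (P : algType Cplx) (sP : P -> P) (k0 : A -> P) (k1 k2 : DG -> P)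
  (HP : is_star_free_product3 sA sDG sDG sP k0 k1 k2) :
  exists F : DA -> P, star_hom sDA sP F /\ injective F.
Proof.
have HDA0 := HDA.
have [Hphi HFA HsDA EA1 EA2] := HDA.
have [Cphi [phii [pc1 pc2 Cphii]]] := conj_opp_cah Hphi.
have CsA := star_cah HA; have IA : involutive sA by case: HA.
have CsDA := star_cah HsDA.
have [HiA HjA UFA] := HFA.
have [sAD sAZ sAM sA1] := CsA.
have [phD phZ phM ph1] := Cphi.
pose sQQ := sQ sDA.
have HsQ : is_star sQQ := sQ_star HsDA.
pose s : Cplx := sqrtC (2^-1).
have ss : s * s = 2^-1 by rewrite -expr2 sqrtCK.
have sc : s^* = s by apply: geC0_conj; rewrite sqrtC_ge0 invr_ge0 ler0n.
have h2 : 2^-1 + 2^-1 = 1 :> Cplx by rewrite [RHS](splitr 1) mul1r.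
pose U : Q DA := mkQ s%:A s%:A s%:A (- s%:A).
have UU : U * U = 1.
  rewrite /U mulmk onemk !mulrN !mulNr opprK !algM ss.
  congr mkQ; try exact: subrr; by rewrite -scalerDl h2 scale1r.
pose f0 := fun a => mkQ (iA a) 0 0 (jA (phi (sA a))) : Q DA.
have Hf0 : alg_hom f0.
  apply: mk_ah => [x y|c x|x y|]; rewrite /f0.
  - by rewrite addmk addr0 sAD phD (ahD HiA) (ahD HjA).
  - by rewrite scalemk scaler0 sAZ phZ conjCK (ahZ HjA) (ahZ HiA).
  - by rewrite mulmk !mulr0 !mul0r !addr0 !add0r sAM phM (ahM HiA) (ahM HjA).
  - by rewrite onemk sA1 ph1 (ah1 HiA) (ah1 HjA).
have Hf0s : star_hom sA sQQ f0.
  split => // a; rewrite /f0 /sQQ sQmk (cah0 CsDA) EA2 EA1 IA //.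
have [gam [Hgam gamg]] := z2_hom HG UU.
have [f1 [Hf1 f1i]] := double_ext HDG HsQ Hgam.
have [HsP Hk0 Hk1 Hk2 UP] := HP.
have [h [Hh hk0 hk1 _ _]] := UP (Q DA) sQQ f0 f1 f1 HsQ Hf0s Hf1 Hf1.
have [gg _] := HG.
have [_ [HiG _ _] _ _ _] := HDG.
pose u := k1 (iG g).
have uu : u * u = 1.
  by rewrite /u -(ahM Hk1.1) -(ahM HiG) gg (ah1 HiG) (ah1 Hk1.1).
pose rho := fun a => u * k0 a * u.
have Hrho : alg_hom rho.
  apply: mk_ah => [x y|c x|x y|]; rewrite /rho.
  - by rewrite (ahD Hk0.1) mulrDr mulrDl.
  - by rewrite (ahZ Hk0.1) -scalerAr -scalerAl.
  - by rewrite (ahM Hk0.1) !mulrA -[u * k0 x * u * u]mulrA uu mulr1.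
  - by rewrite (ah1 Hk0.1) mulr1 uu.
have [F [HFs Fi]] := double_ext HDA0 HsP Hrho.
exists F; split => //.
have Hj' : alg_hom (fun a => jA (phi (sA a))).
  exact: (ah_comp (cah_cah CsA Cphi) HjA).
have Hi' : alg_hom (fun b => iA (sA (phii b))).
  exact: (ah_comp (cah_cah Cphii CsA) HiA).
have [th [Hth thi thj _]] := UFA DA _ _ Hj' Hi'.
pose Psi := fun x => U * mkQ x 0 0 (th x) * U.
have HPsi : alg_hom Psi.
  apply: mk_ah => [x y|c x|x y|]; rewrite /Psi.
  - by rewrite (ahD Hth) -mulrDl -mulrDr addmk addr0.
  - by rewrite (ahZ Hth) scalerAl scalerAr scalemk scaler0.
  - rewrite (ahM Hth) !mulrA -[U * mkQ x 0 0 (th x) * U * U]mulrA UU mulr1.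
    by rewrite -[U * _ * mkQ y _ _ _]mulrA mulmk !mulr0 !mul0r !addr0 !add0r.
  - by rewrite (ah1 Hth) -onemk mulr1 UU.
have Hphi2 : alg_hom (fun x => h (F x)) by exact: (ah_comp HFs.1 Hh.1).
have hu : h u = U by rewrite /u hk1 f1i gamg.
have E : (fun x => h (F x)) =1 Psi.
  apply: (fp_unique HFA) => // [a|b] /=.
  - by rewrite Fi /rho !(ahM Hh.1) hu hk0 /Psi thi.
  - rewrite -[b]pc2 -EA1 HFs.2 Fi Hh.2 /rho !(ahM Hh.1) hu hk0.
    have [_ _ _ M] := HsQ.
    rewrite !M mulrA -Hf0s.2 /Psi.
    rewrite EA1 thj pc1 /f0 IA.
    exact: keyU.
move=> x y /(congr1 h); rewrite !E /Psi => Exy.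
have : U * (U * mkQ x 0 0 (th x) * U) * U = U * (U * mkQ y 0 0 (th y) * U) * U by rewrite Exy.
rewrite !mulrA UU mul1r -!mulrA UU !mulr1.
rewrite mul1r; exact: mkQ_inj.
Qed.
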